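(* Let $n\ge3$ and let $\mathcal{G}$ be the directed star graph on nodes $\{1,\dots,n\}$ with center $1$, whose edges are $(1,j)$ and $(j,1)$ for $j=2,\dots,n$ together with self-loops $(i,i)$ at every node. Let $\tau\in\mathbb{Z}$ with $2\le\tau\le 2n-3$. Then the matrix $P^*$ with $P^*(1,1)=0$, $P^*(1,j)=\frac1{n-1}$ for $j\ge2$, and $P^*(j,1)=1$, $P^*(j,l)=0$ for $j\ge2$, $l\ne1$, is an optimal solution of $\max_P\min_{i,j}\mathbb{P}(T_{ij}(P)\le\tau)$ over all Markov chain strategies $P$ conforming to $\mathcal{G}$, and the value of the game is $$\mathbb{V}=\begin{cases}1-\left(1-\frac1{n-1}\right)^{\frac{\tau-1}{2}}, & \tau \text{ odd},\\[2pt] 1-\left(1-\frac1{n-1}\right)^{\frac{\tau}{2}}, & \tau\text{ even}.\end{cases}$$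
   Context: A Markov chain strategy conforming to $\mathcal{G}=(V,\mathcal{E})$ is a row-stochastic nonnegative $P=(p_{ij})$ with $p_{ij}=0$ for $(i,j)\notin\mathcal{E}$. For the Markov chain $(X_k)$ with transition matrix $P$, $T_{ij}=\min\{k\ge1:X_k=j\}$ given $X_0=i$. The value of the game is $\mathbb{V}=\max_P\min_{i,j}\mathbb{P}(T_{ij}(P)\le\tau)$. *)

(* Defs.v *)
From HB Require Import structures.
From mathcomp Require Import all_boot all_order all_algebra.
From mathcomp Require Import reals.
Set Implicit Arguments. Unset Strict Implicit. Unset Printing Implicit Defensive.
Import Order.TTheory GRing.Theory Num.Theory.
Local Open Scope ring_scope.

(* Directed star graph on nodes 'I_n (node with value 0 = paper's node 1 is
   the centre): edges (c,j), (j,c), plus self-loops. *)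
Definition star_edge (n : nat) (i j : 'I_n) : bool :=
  (i == j) || (val i == 0%N) || (val j == 0%N).

Definition mc_strategy (R : numDomainType) (n : nat) (E : rel 'I_n)
  (P : 'M[R]_n) : Prop :=
  [/\ forall i j, 0 <= P i j,
      forall i, \sum_(j < n) P i j = 1
    & forall i j, ~~ E i j -> P i j = 0].

(* P(T_ij <= tau) for the chain with transition matrix P started at X_0 = i,
   T_ij = min {k >= 1 : X_k = j}: sum over k = 1..tau of the probability of the
   trajectories (X_0,...,X_k) with X_0 = i, X_k = j, X_m <> j for 0 < m < k,
   each trajectory having probability prod_{m<k} P(X_m, X_{m+1}). *)
Definition hit_le (R : numDomainType) (n : nat) (P : 'M[R]_n) (tau : nat)
  (i j : 'I_n) : R :=
  \sum_(1 <= k < tau.+1)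
    \sum_(x : {ffun 'I_k.+1 -> 'I_n} |
            [&& x ord0 == i, x ord_max == j &
                [forall m : 'I_k.+1, ((0 < m)%N && (m < k)%N) ==> (x m != j)]])
      \prod_(m < k) P (x (inord m)) (x (inord m.+1)).

Definition Pstar (R : numFieldType) (n : nat) : 'M[R]_n :=
  \matrix_(i, j)
    if val i == 0%N then (if val j == 0%N then 0 else (n.-1%:R)^-1)
    else (if val j == 0%N then 1 else 0).

(* Main.v *)
Require Import Defs.
From HB Require Import structures.
From mathcomp Require Import all_boot all_order all_algebra.
From mathcomp Require Import reals.
From mathcomp Require Import ring lra.
Set Implicit Arguments. Unset Strict Implicit. Unset Printing Implicit Defensive.
Import Order.TTheory GRing.Theory Num.Theory.
Local Open Scope ring_scope.

Section Rec.
Variable R : numDomainType.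
Variable n : nat.
Variable P : 'M[R]_n.

Definition Sk k (i j : 'I_n) : R :=
  \sum_(x : {ffun 'I_k.+1 -> 'I_n} |
            [&& x ord0 == i, x ord_max == j &
                [forall m : 'I_k.+1, ((0 < m)%N && (m < k)%N) ==> (x m != j)]])
      \prod_(m < k) P (x (inord m)) (x (inord m.+1)).

Lemma hit_leE tau i j : hit_le P tau i j = \sum_(1 <= k < tau.+1) Sk k i j.
Proof. by []. Qed.

Lemma Sk0 i j : Sk 0 i j = (i == j)%:R.
Proof.
rewrite /Sk; case: eqP => [<-|ne].
  rewrite (big_pred1 [ffun => i]) ?big_ord0 // => x /=.
  apply/idP/eqP => [/and3P[/eqP h1 _ _]|->]; last first.
    by rewrite !ffunE eqxx /=; apply/forallP => m; rewrite ltn0 andbF.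
  by apply/ffunP => m; rewrite ffunE (ord1 m).
rewrite big_pred0 // => x; apply/negP => /and3P[/eqP h1 /eqP h2 _]; apply: ne.
by rewrite -h1 -h2; congr (x _); apply: val_inj.
Qed.

Lemma sum_pair (I J : finType) (F : I * J -> R) : \sum_p F p = \sum_a \sum_b F (a, b).
Proof. by rewrite pair_bigA; apply: eq_bigr => -[]. Qed.

Definition fcons k (a : 'I_n) (y : {ffun 'I_k.+1 -> 'I_n}) : {ffun 'I_k.+2 -> 'I_n} :=
  [ffun m => if unlift ord0 m is Some m' then y m' else a].
Definition ftail k (x : {ffun 'I_k.+2 -> 'I_n}) : {ffun 'I_k.+1 -> 'I_n} :=
  [ffun m => x (lift ord0 m)].

Lemma fcons0 k a y : @fcons k a y ord0 = a.
Proof. by rewrite ffunE unlift_none. Qed.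
Lemma fconsS k a y m : @fcons k a y (lift ord0 m) = y m.
Proof. by rewrite ffunE liftK. Qed.

Lemma inordS k (m : nat) : (m < k.+1)%N -> inord m.+1 = lift ord0 (inord m : 'I_k.+1) :> 'I_k.+2.
Proof. by move=> h; apply: val_inj; rewrite /= /bump /= inordK // inordK. Qed.

Lemma Sk_rec k i j : Sk k.+1 i j = \sum_(l | (k == 0)%N || (l != j)) P i l * Sk k l j.
Proof.
rewrite /Sk big_mkcond /=.
rewrite (reindex (fun p : 'I_n * {ffun 'I_k.+1 -> 'I_n} => fcons p.1 p.2)) /=; last first.
  apply: onW_bij; exists (fun x : {ffun 'I_k.+2 -> 'I_n} => (x ord0, ftail x)).
    by case=> a y /=; rewrite fcons0; congr pair; apply/ffunP => m; rewrite ffunE fconsS.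
  move=> x; apply/ffunP => m; rewrite ffunE; case: unliftP => [m' ->|->] //.
  by rewrite ffunE.
rewrite sum_pair /=.
rewrite (bigD1 i) //= [X in _ + X]big1 ?addr0; last first.
  move=> a /negbTE ai; apply: big1 => y _; by rewrite fcons0 ai.
symmetry; under eq_bigr => l _ do rewrite big_distrr big_mkcond /=.
rewrite exchange_big /=; apply: eq_bigr => y _.
rewrite big_mkcond (bigD1 (y ord0)) //= [X in _ + X]big1 ?addr0; last first.
  by move=> l /negbTE ne; rewrite (eq_sym (y ord0)) ne; case: ifP.
have hmax : (ord_max : 'I_k.+2) = lift ord0 ord_max by apply: val_inj.
rewrite fcons0 eqxx hmax fconsS /= eqxx /=.
have -> : [forall m : 'I_k.+2, (0 < m < k.+1)%N ==> (fcons i y m != j)] =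
          ((k == 0)%N || (y ord0 != j)) && [forall m : 'I_k.+1, (0 < m < k)%N ==> (y m != j)].
  apply/forallP/andP => [H|[H1 /forallP H2] m].
    split.
      case: k y H {hmax} => // k y H; apply/orP; right.
      by have := H (lift ord0 ord0); rewrite fconsS.
    apply/forallP => m; apply/implyP => /andP[_ mk].
    by have := H (lift ord0 m); rewrite fconsS /= /bump /= ltnS mk.
  apply/implyP => /andP[m0 mk]; case: (unliftP ord0 m) m0 mk => [m' ->|->] //= _.
  rewrite fconsS /bump /= add1n ltnS => mk.
  case: (posnP m') => [m'0|m'p].
    have -> : m' = ord0 by apply: val_inj.
    have kp : (0 < k)%N by move: mk; rewrite m'0.
    by case/orP: H1 => [/eqP k0|//]; rewrite k0 in kp.
  by have := H2 m'; rewrite m'p mk.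
case: ((k == 0)%N || (y ord0 != j)) => /=; last by rewrite andbF.
case: ifP => // _.
rewrite big_ord_recl /=.
have -> : (inord 1 : 'I_k.+2) = lift ord0 ord0 by apply: val_inj; rewrite /= inordK.
have -> : (inord 0 : 'I_k.+2) = ord0 by apply: val_inj; rewrite /= inordK.
rewrite fcons0 fconsS; congr (_ * _); apply: eq_bigr => m _.
have h1 : (m.+1 < k.+1)%N by rewrite ltnS.
have h2 : (m < k.+1)%N by apply: ltnW.
by rewrite /bump /= add1n (inordS h1) (inordS h2) !fconsS.
Qed.

Lemma hit_le0 i j : hit_le P 0 i j = 0.
Proof. by rewrite hit_leE big_geq. Qed.

Lemma hit_le_rec t i j :
  hit_le P t.+1 i j = P i j + \sum_(l | l != j) P i l * hit_le P t l j.
Proof.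
rewrite hit_leE big_ltn // Sk_rec /=.
under eq_bigr => l _ do rewrite Sk0.
rewrite (bigD1 j) //= eqxx mulr1 big1 ?addr0; last first.
  by move=> l /negbTE ->; rewrite mulr0.
congr (_ + _).
rewrite big_add1 /=.
rewrite (eq_big_nat _ _ (F2 := fun k => \sum_(l | l != j) P i l * Sk k l j)); last first.
  by move=> k /andP[k1 _]; rewrite Sk_rec; case: k k1.
rewrite exchange_big /=; apply: eq_bigr => l _.
by rewrite hit_leE big_distrr.
Qed.

End Rec.
Section Main.
Variable R : realFieldType.
Variable n : nat.
Local Notation N := n.+3.
Local Notation w := ((n.+2)%:R^-1 : R).
Local Notation r := (1 - (n.+2)%:R^-1 : R).

Lemma w_ge0 : 0 <= w. Proof. by rewrite invr_ge0 ler0n. Qed.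
Lemma w_le1 : w <= 1. Proof. by rewrite invf_le1 ?ltr0n // ler1n. Qed.
Lemma r_ge0 : 0 <= r. Proof. by rewrite subr_ge0 w_le1. Qed.
Lemma r_le1 : r <= 1. Proof. by rewrite lerBlDr lerDl w_ge0. Qed.
Lemma rmono a b : (a <= b)%N -> r ^+ b <= r ^+ a.
Proof. by move=> h; apply: (ler_wiXn2l r_ge0 r_le1 h). Qed.
Lemma rX_ge0 a : 0 <= r ^+ a. Proof. exact: exprn_ge0 r_ge0. Qed.

Lemma rowsplit (F : 'I_N -> R) j : j != ord0 ->
  \sum_l F l = F j + (F ord0 + \sum_(l | (l != j) && (l != ord0)) F l).
Proof. by move=> j0; rewrite (bigD1 j) //= (bigD1 ord0) 1?eq_sym //=. Qed.

Lemma split_rec (P : 'M[R]_N) t i j : j != ord0 ->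
  hit_le P t.+1 i j = P i j + (P i ord0 * hit_le P t ord0 j +
     \sum_(l | (l != j) && (l != ord0)) P i l * hit_le P t l j).
Proof. by move=> j0; rewrite hit_le_rec (bigD1 ord0) 1?eq_sym //. Qed.

Lemma exp_eq tau : (if odd tau then tau.-1./2 else tau./2) = tau./2.
Proof.
by case: tau => [|t] //=; rewrite uphalf_half; case: (odd t).
Qed.

Lemma upper (P : 'M[R]_N) tau : mc_strategy (@star_edge N) P ->
  exists i j : 'I_N, hit_le P tau i j <= 1 - r ^+ (tau./2).
Proof.
case=> Pge0 Psum Pedge.
set s := P ord0 ord0.
have [j' hj] : exists j' : 'I_n.+2, P ord0 (lift ord0 j') <= (1 - s) * w.
  apply/existsP; apply: contraT; rewrite negb_exists => /forallP H.
  have : \sum_(l < n.+2) (1 - s) * w < \sum_(l < n.+2) P ord0 (lift ord0 l).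
    apply: ltr_sum; first by apply/hasP; exists ord0 => //; rewrite mem_index_enum.
    by move=> l _; have := H l; rewrite ltNge.
  rewrite sumr_const card_ord.
  have -> : (1 - s) * w *+ n.+2 = 1 - s.
    by rewrite -mulr_natr -mulrA mulVf ?pnatr_eq0 // mulr1.
  have := Psum ord0; rewrite big_ord_recl -/s.
  set S := \sum_(_ < _) _ => h; have -> : S = 1 - s by lra.
  by rewrite lt_irreflexive.
set j := lift ord0 j'.
have j0 : j != ord0 by [].
have Pleaf : forall l, val l != 0%N -> l != j -> P l j = 0.
  move=> l l0 lj; apply: Pedge; rewrite /star_edge negb_or negb_or lj l0 /=.
  by [].
pose i : 'I_N := inord (if val j == 1%N then 2 else 1).
have i0 : val i != 0%N by rewrite /i /= inordK; case: ifP.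
have ij : i != j.
  apply/eqP => /(congr1 val); rewrite /i /= inordK; last by case: ifP.
  by case: ifP => [/eqP ->|/negbT /eqP ne /esym] //.
exists i, j.
suff [_ H] : hit_le P tau ord0 j <= 1 - r ^+ (tau.+1./2) /\
  forall l, val l != 0%N -> l != j -> hit_le P tau l j <= 1 - r ^+ (tau./2).
  exact: H.
elim: tau => [|t [IH0 IHl]].
  by rewrite !hit_le0 expr0 subrr; split => // l _ _; rewrite hit_le0.
have B_le_A : 1 - r ^+ (t./2) <= 1 - r ^+ (t.+1./2).
  by rewrite lerD2l lerN2 rmono // half_leq.
have A_le_C : 1 - r ^+ (t.+1./2) <= 1 - r ^+ (t./2).+1.
  rewrite lerD2l lerN2 rmono // -[(t./2).+1]/(t.+2./2) half_leq //.
split.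
- rewrite split_rec //.
  have hS : \sum_(l | (l != j) && (l != ord0)) P ord0 l * hit_le P t l j <=
            (1 - r ^+ (t./2)) * (1 - s - P ord0 j).
    have -> : 1 - s - P ord0 j = \sum_(l | (l != j) && (l != ord0)) P ord0 l.
      have := Psum ord0; rewrite (rowsplit (P ord0) j0) -/s.
      set S := \sum_(_ | _) _ => h; lra.
    rewrite mulr_sumr; apply: ler_sum => l /andP[lj l0].
    rewrite mulrC; apply: ler_wpM2r => //; apply: IHl => //.
  have h0 : s * hit_le P t ord0 j <= s * (1 - r ^+ (t./2).+1).
    by apply: ler_wpM2l; [exact: Pge0 | exact: le_trans IH0 A_le_C].
  have hX : 0 <= r ^+ (t./2) * ((1 - s) * w - P ord0 j).
    by apply: mulr_ge0; rewrite ?rX_ge0 // subr_ge0.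
  move: h0 hS hX; rewrite /= !exprS -/s.
  set X := r ^+ (t./2); set g := hit_le P t ord0 j; set S := \sum_(_ | _) _.
  move=> h0 hS hX.
  set q := P ord0 j; set W := n.+2%:R^-1.
  apply: (@le_trans _ _ (q + s * (1 - (1 - W) * X) + (1 - X) * (1 - s - q))).
    by rewrite addrA lerD // lerD.
  rewrite -subr_ge0.
  have -> : 1 - (1 - W) * X - (q + s * (1 - (1 - W) * X) + (1 - X) * (1 - s - q))
            = X * ((1 - s) * W - q) by ring.
  exact: hX.
- move=> l l0 lj; rewrite split_rec // Pleaf // add0r.
  have hl : P l ord0 + \sum_(l0 | (l0 != j) && (l0 != ord0)) P l l0 = 1.
    by have := Psum l; rewrite (rowsplit (P l) j0) Pleaf // add0r.
  apply: (@le_trans _ _ ((P l ord0 + \sum_(l0 | (l0 != j) && (l0 != ord0)) P l l0) * (1 - r ^+ (t.+1./2)))); last by rewrite hl mul1r.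
  rewrite mulrDl mulr_suml; apply: lerD.
    by apply: ler_wpM2l; [exact: Pge0 | exact: IH0].
  apply: ler_sum => l' /andP[l'j l'0]; apply: ler_wpM2l; first exact: Pge0.
  by apply: le_trans B_le_A; apply: IHl => //.
Qed.

Local Notation Ps := (Pstar R N).

Lemma neq0 (l : 'I_N) : l != ord0 -> (val l == 0%N) = false.
Proof. by move=> h; apply/negbTE; move: h; apply: contra => /eqP e; apply/eqP/val_inj. Qed.

Lemma PsE i j : Ps i j = if val i == 0%N then (if val j == 0%N then 0 else w)
                         else (if val j == 0%N then 1 else 0).
Proof. by rewrite mxE. Qed.

Lemma Ps_mc : mc_strategy (@star_edge N) Ps.
Proof.
split.
- move=> i j; rewrite PsE; case: ifP => _; case: ifP => _ //; exact: w_ge0.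
- move=> i; rewrite big_ord_recl.
  have hl : forall l : 'I_n.+2, (val (lift ord0 l) == 0%N) = false by [].
  under eq_bigr => l _ do rewrite PsE hl.
  rewrite PsE /=; case: ifP => _.
    rewrite sumr_const card_ord add0r.
    rewrite -[_ *+ n.+2]mulr_natr; apply: mulVf; by rewrite pnatr_eq0.
  by rewrite big1 ?addr0.
- move=> i j; rewrite /star_edge PsE !negb_or => /andP[/andP[_ /negbTE ->] /negbTE ->].
  by [].
Qed.

Lemma Ps_sum i : \sum_l Ps i l = 1.
Proof. by case: Ps_mc. Qed.

Lemma Ps_leaf j t : j != ord0 ->
  hit_le Ps t ord0 j = 1 - r ^+ (t.+1./2) /\
  forall l, l != ord0 -> l != j -> hit_le Ps t l j = 1 - r ^+ (t./2).
Proof.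
move=> j0; elim: t => [|t [IH0 IHl]].
  by rewrite !hit_le0 expr0 subrr; split => // l _ _; rewrite hit_le0.
split.
- rewrite split_rec //.
  rewrite (eq_bigr (fun l => Ps ord0 l * (1 - r ^+ (t./2)))); last first.
    by move=> l /andP[lj l0]; rewrite IHl.
  rewrite -mulr_suml.
  have hs := Ps_sum ord0; rewrite (rowsplit _ j0) in hs.
  move: hs; rewrite !PsE /= (neq0 j0) /=.
  rewrite /= exprS.
  set S := \sum_(_ | _) _; set X := r ^+ _ => hs.
  have -> : S = 1 - n.+2%:R^-1.
    by move: hs; rewrite add0r => /(canRL (addKr _)) ->; rewrite addrC.
  by rewrite mul0r add0r; ring.
- move=> l l0 lj; rewrite split_rec // big1; last first.
    by move=> l' /andP[_ l'0]; rewrite PsE (neq0 l0) (neq0 l'0) mul0r.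
  by rewrite !PsE (neq0 l0) (neq0 j0) /= mul1r add0r addr0 IH0.
Qed.

Lemma Ps_jj j t : j != ord0 -> hit_le Ps t.+1 j j = 1 - r ^+ (t.+1./2).
Proof.
move=> j0; have [IH0 _] := Ps_leaf t j0.
rewrite split_rec // big1; last first.
  by move=> l' /andP[_ l'0]; rewrite PsE (neq0 j0) (neq0 l'0) mul0r.
by rewrite !PsE (neq0 j0) /= mul1r add0r addr0 IH0.
Qed.

Lemma Ps_to0_leaf l t : l != ord0 -> hit_le Ps t.+1 l ord0 = 1.
Proof.
move=> l0; rewrite hit_le_rec big1 ?addr0; last first.
  by move=> l' l'0; rewrite PsE (neq0 l0) (neq0 l'0) mul0r.
by rewrite PsE (neq0 l0).
Qed.

Lemma Ps_to0_center t : hit_le Ps t.+2 ord0 ord0 = 1.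
Proof.
rewrite hit_le_rec (eq_bigr (fun l => Ps ord0 l)); last first.
  by move=> l l0; rewrite Ps_to0_leaf // mulr1.
by have := Ps_sum ord0; rewrite (bigD1 ord0).
Qed.

End Main.

Unset Implicit Arguments.

Theorem theorem2 (R : realType) (n tau : nat) (hn : (3 <= n)%N)
  (htau : (2 <= tau <= 2 * n - 3)%N) :
  let V : R := 1 - (1 - (n.-1%:R)^-1) ^+ (if odd tau then tau.-1./2 else tau./2) in
  [/\ mc_strategy (@star_edge n) (Pstar R n),
      (* min_{i,j} P(T_ij(P^* ) <= tau) = V *)
      (forall i j : 'I_n, V <= hit_le (Pstar R n) tau i j),
      (exists i j : 'I_n, hit_le (Pstar R n) tau i j = V)
    & (* every conforming strategy has min_{i,j} P(T_ij(P) <= tau) <= V *)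
      forall P : 'M[R]_n, mc_strategy (@star_edge n) P ->
        exists i j : 'I_n, hit_le P tau i j <= V].
Proof.
case: n hn htau => [|[|[|n]]] // _ htau.
move=> V; rewrite {}/V exp_eq.
change (n.+3.-1) with n.+2.
split.
- exact: Ps_mc.
- move=> i j; case: (eqVneq j ord0) => [->|j0].
    have lt1 : forall a, 1 - (1 - (n.+2%:R)^-1) ^+ a <= 1 :> R.
      by move=> a; rewrite lerBlDr lerDl rX_ge0.
    case: (eqVneq i ord0) => [->|i0].
      by case: tau htau => [|[|t]] // _; rewrite Ps_to0_center; exact: lt1.
    by case: tau htau => [|t] // _; rewrite Ps_to0_leaf //; exact: lt1.
  have [H0 Hl] := Ps_leaf R tau j0.
  case: (eqVneq i ord0) => [->|i0].
    by rewrite H0 lerD2l lerN2 rmono // half_leq.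
  case: (eqVneq i j) => [->|ij]; last by rewrite Hl.
  by case: tau htau {H0 Hl} => [|t] // _; rewrite Ps_jj.
- exists (lift ord0 ord0), (lift ord0 ord0).
  by case: tau htau => [|t] // _; rewrite Ps_jj.
- by move=> P hP; apply: upper.
Qed.
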